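(* Let $q\in[0,1)$, $\beta>0$, and $s_0,s_1\in(-1,0)$ with $|s_0|>|s_1|$. Fix integers $x_1(0)>x_2(0)$. Let $\mathbf{x}(t)=(x_1(t),x_2(t))$ be the two-particle system with parameters $(s_0,s_1)$ started from $(x_1(0),x_2(0))$. Let $y_1'(0)$, with $x_2(0)<y_1'(0)\le x_1(0)$, be random with distribution $$\mathbb{P}(y_1'(0)=y)=\varphi_{q,s_1^2/s_0^2,\,s_1^2}\bigl(y-x_2(0)-1\mid x_1(0)-x_2(0)-1\bigr),$$ and let $\mathbf{y}(t)=(y_1(t),y_2(t))$ be the two-particle system with parameters $(s_1,s_0)$ started from $(y_1'(0),x_2(0))$. Then the trajectories of the second particle, $\{x_2(t)\}_{t\in\mathbb{Z}_{\ge0}}$ and $\{y_2(t)\}_{t\in\mathbb{Z}_{\ge0}}$, have the same distribution.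
   Context: $(a;q)_k=\prod_{i=0}^{k-1}(1-aq^i)$. For $0\le j\le m$: $\varphi_{q,\mu,\nu}(j\mid m)=\mu^j\frac{(\nu/\mu;q)_j(\mu;q)_{m-j}}{(\nu;q)_m}\frac{(q;q)_m}{(q;q)_j(q;q)_{m-j}}$, where $\mu^j(\nu/\mu;q)_j$ means $\prod_{i=0}^{j-1}(\mu-\nu q^i)$. Two-particle system with parameters $(\sigma_1,\sigma_2)$ (with $\sigma_i\in(-1,0)$, and $\beta$, $q$ fixed): a discrete-time Markov chain on pairs of integers $x_1(t)>x_2(t)$. At each step, first $x_1$ jumps right by $h_0\in\{0,1\}$ with $\mathbb{P}(h_0=1)=\frac{\beta\sigma_1^2}{1+\beta\sigma_1^2}$. Then, with $g=x_1(t)-x_2(t)-1$, the particle $x_2$ jumps right by $h_1\in\{0,1\}$ with $\mathbb{P}(h_1=1\mid h_0=0)=\frac{\beta\sigma_2^2(1-q^g)}{1+\beta\sigma_2^2}$ and $\mathbb{P}(h_1=1\mid h_0=1)=\frac{\beta\sigma_2^2+q^g\sigma_2^2}{1+\beta\sigma_2^2}$ (with $0^0=1$). *)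

(* Defs.v *)
From mathcomp Require Import all_boot all_order all_algebra.
From mathcomp Require Import reals.
Set Implicit Arguments. Unset Strict Implicit. Unset Printing Implicit Defensive.
Import Order.TTheory GRing.Theory Num.Theory.
Local Open Scope ring_scope.

Section TwoParticle.
Variable R : realType.

Definition qpoch (a q : R) (k : nat) : R := \prod_(i < k) (1 - a * q ^+ i).

(* phi_{q,mu,nu}(j | m), with mu^j (nu/mu;q)_j := prod_{i<j} (mu - nu q^i) *)
Definition phi (q mu nu : R) (j m : nat) : R :=
  (\prod_(i < j) (mu - nu * q ^+ i)) * qpoch mu q (m - j) / qpoch nu q m
  * (qpoch q q m / (qpoch q q j * qpoch q q (m - j))).

(* gap g = x1 - x2 - 1 (as a nat; the chain keeps x1 > x2) *)
Definition gap (st : int * int) : nat := absz (st.1 - st.2 - 1)%R.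

Definition step_prob (q beta sg1 sg2 : R) (st : int * int) (h0 h1 : bool) : R :=
  let p0 := beta * sg1 ^+ 2 / (1 + beta * sg1 ^+ 2) in
  let qg := q ^+ gap st in
  let p1 := if h0 then (beta * sg2 ^+ 2 + qg * sg2 ^+ 2) / (1 + beta * sg2 ^+ 2)
            else beta * sg2 ^+ 2 * (1 - qg) / (1 + beta * sg2 ^+ 2) in
  (if h0 then p0 else 1 - p0) * (if h1 then p1 else 1 - p1).

Definition next (st : int * int) (h0 h1 : bool) : int * int :=
  (st.1 + (h0 : nat)%:Z, st.2 + (h1 : nat)%:Z).

Fixpoint fut_prob (q beta sg1 sg2 : R) (st : int * int) (a : seq int) : R :=
  match a with
  | [::] => 1
  | a1 :: a' =>
      \sum_(h0 : bool) \sum_(h1 : bool)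
        (if (st.2 + (h1 : nat)%:Z == a1) then
           step_prob q beta sg1 sg2 st h0 h1 * fut_prob q beta sg1 sg2 (next st h0 h1) a'
         else 0)
  end.

(* P(x2(0) = a_0, ..., x2(T) = a_T) for the system with parameters
   (sg1, sg2) started deterministically from st *)
Definition traj2_prob (q beta sg1 sg2 : R) (st : int * int) (a : seq int) : R :=
  match a with
  | [::] => 1
  | a0 :: a' => if st.2 == a0 then fut_prob q beta sg1 sg2 st a' else 0
  end.

End TwoParticle.

(* Main.v *)
Require Import Defs.
From mathcomp Require Import all_boot all_order all_algebra.
From mathcomp Require Import reals ring lra zify.
Import Order.TTheory GRing.Theory Num.Theory.
Set Implicit Arguments. Unset Strict Implicit. Unset Printing Implicit Defensive.
Local Open Scope ring_scope.

Definition spg (R : realType) (q beta S1 S2 : R) (g : nat) (h0 h1 : bool) : R :=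
  let p0 := beta * S1 / (1 + beta * S1) in
  let qg := q ^+ g in
  let p1 := if h0 then (beta * S2 + qg * S2) / (1 + beta * S2)
            else beta * S2 * (1 - qg) / (1 + beta * S2) in
  (if h0 then p0 else 1 - p0) * (if h1 then p1 else 1 - p1).

Lemma step_probE (R : realType) (q beta sg1 sg2 : R) st h0 h1 :
  step_prob q beta sg1 sg2 st h0 h1 = spg q beta (sg1^+2) (sg2^+2) (gap st) h0 h1.
Proof. by []. Qed.

Section S.
Variables (R : realType) (q beta A B : R).
Hypotheses (hq0 : 0 <= q) (hq1 : q < 1) (hb : 0 < beta) (hB0 : 0 < B) (hBA : B < A) (hA1 : A < 1).

Ltac hy := move: (hq0) (hq1) (hb) (hB0) (hBA) (hA1) => ??????.

Definition Pr (mu nu : R) k := \prod_(i<k) (mu - nu * q^+i).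

Lemma PrS mu nu k : Pr mu nu k.+1 = Pr mu nu k * (mu - nu * q^+k).
Proof. by rewrite /Pr big_ord_recr. Qed.
Lemma qpochS a n : qpoch a q n.+1 = qpoch a q n * (1 - a * q^+n).
Proof. by rewrite /qpoch big_ord_recr. Qed.
Lemma qpoch0 a : qpoch a q 0 = 1.
Proof. by rewrite /qpoch big_ord0. Qed.
Lemma Pr0 mu nu : Pr mu nu 0 = 1.
Proof. by rewrite /Pr big_ord0. Qed.

Lemma phi_gen mu nu j m : (j <= m)%N -> phi q mu nu j m =
  Pr mu nu j * qpoch mu q (m - j) / qpoch nu q m * (qpoch q q m / (qpoch q q j * qpoch q q (m - j))).
Proof. by []. Qed.

Lemma pw_ge0 n : 0 <= q ^+ n. Proof. exact: exprn_ge0. Qed.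
Lemma pw_le1 n : q ^+ n <= 1. Proof. hy; apply: exprn_ile1 => //; lra. Qed.

Lemma qpoch_gt0 a n : 0 <= a -> a < 1 -> 0 < qpoch a q n.
Proof.
move=> h1 h2; apply: prodr_gt0 => i _.
have h : a * q ^+ i <= a * 1 by apply: ler_wpM2l => //; exact: pw_le1.
rewrite mulr1 in h; lra.
Qed.

Lemma A0 : 0 < A. Proof. hy; lra. Qed.
Lemma mu_ge0 : 0 <= B / A. Proof. hy; apply: divr_ge0; lra. Qed.
Lemma mu_lt1 : B / A < 1. Proof. hy; rewrite ltr_pdivrMr; [lra| exact: A0]. Qed.


Lemma q01 : 0 <= q /\ q <= 1. Proof. hy; split; lra. Qed.
Lemma pw01 n : 0 <= q ^+ n /\ q ^+ n <= 1. Proof. split; [exact: pw_ge0 | exact: pw_le1]. Qed.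
Lemma le1M (x y : R) : 0 <= x /\ x <= 1 -> 0 <= y /\ y <= 1 -> 0 <= x * y /\ x * y <= 1.
Proof. move=> [? ?] [? ?]; split; first exact: mulr_ge0.
by rewrite -[1]mulr1; apply: ler_pM. Qed.

Ltac expand := rewrite ?addSn ?addnS ?qpochS ?PrS ?qpoch0 ?Pr0 ?exprS ?exprD ?expr0.
Ltac nzq := first [exact: mu_ge0 | exact: mu_lt1 | hy; lra].
Ltac closef := field; repeat (apply/andP; split); apply lt0r_neq0;
  first [ apply qpoch_gt0; nzq | hy; nra ].

Notation ph := (phi q (B/A) B).
Notation px := (spg q beta A B).
Notation py := (spg q beta B A).

Lemma C0_S k n : let g := (k.+1 + n)%N in
  px g false false * ph k.+1 g + px g true false * ph k.+1 g.+1
  = ph k.+1 g * py k.+1 false false + ph k g * py k true false.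
Proof.
move=> g; rewrite /spg /= !phi_gen /g; try lia.
have -> : (k.+1 + n - k.+1 = n)%N by lia.
have -> : ((k.+1 + n).+1 - k.+1 = n.+1)%N by lia.
have -> : (k.+1 + n - k = n.+1)%N by lia.
expand.
case: (pw01 k) => ? ?; case: (pw01 n) => ? ?; case: (le1M (pw01 k) (pw01 n)) => ? ?.
case: (le1M q01 (le1M (pw01 k) (pw01 n))) => ? ?.
closef.
Qed.

Lemma C0_0 n :
  px n false false * ph 0 n + px n true false * ph 0 n.+1 = ph 0 n * py 0 false false.
Proof.
rewrite /spg /= !phi_gen // !subn0.
expand.
case: (pw01 n) => ? ?; case: (le1M q01 (pw01 n)) => ? ?.
closef.
Qed.

Lemma C0_top g :
  px g true false * ph g.+1 g.+1 = ph g g * py g true false.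
Proof.
rewrite /spg /= !phi_gen // !subnn.
expand.
case: (pw01 g) => ? ?; case: (le1M q01 (pw01 g)) => ? ?.
closef.
Qed.

Lemma C1_a k n : let g := (k + n.+1)%N in
  px g false true * ph k (k + n) + px g true true * ph k g
  = ph k.+1 g * py k.+1 false true + ph k g * py k true true.
Proof.
move=> g; rewrite /spg /= !phi_gen /g; try lia.
have -> : (k + n - k = n)%N by lia.
have -> : (k + n.+1 - k = n.+1)%N by lia.
have -> : (k + n.+1 - k.+1 = n)%N by lia.
expand.
case: (pw01 k) => ? ?; case: (pw01 n) => ? ?; case: (le1M (pw01 k) (pw01 n)) => ? ?.
case: (le1M q01 (le1M (pw01 k) (pw01 n))) => ? ?.
case: (le1M q01 (pw01 k)) => ? ?; case: (le1M q01 (pw01 n)) => ? ?.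
closef.
Qed.

Lemma C1_b g : px g true true * ph g g = ph g g * py g true true.
Proof.
rewrite /spg /=.
have ? : 1 + beta * A != 0 by apply: lt0r_neq0; hy; nra.
have ? : 1 + beta * B != 0 by apply: lt0r_neq0; hy; nra.
field. by apply/andP; split.
Qed.

Lemma N_0 n : ph 0 n.+1 * (1 - B * q ^+ n) = (1 - (B/A) * q ^+ n) * ph 0 n.
Proof.
rewrite !phi_gen // !subn0.
expand.
case: (pw01 n) => ? ?; case: (le1M q01 (pw01 n)) => ? ?.
closef.
Qed.

Lemma N_S k n : let m := (k.+1 + n)%N in
  ph k.+1 m.+1 * (1 - B * q ^+ m) =
  (1 - (B/A) * q ^+ n) * ph k.+1 m + q ^+ n.+1 * ((B/A) - B * q ^+ k) * ph k m.
Proof.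
move=> m; rewrite !phi_gen /m; try lia.
have -> : (k.+1 + n - k.+1 = n)%N by lia.
have -> : ((k.+1 + n).+1 - k.+1 = n.+1)%N by lia.
have -> : (k.+1 + n - k = n.+1)%N by lia.
expand.
case: (pw01 k) => ? ?; case: (pw01 n) => ? ?; case: (le1M (pw01 k) (pw01 n)) => ? ?.
case: (le1M q01 (le1M (pw01 k) (pw01 n))) => ? ?.
case: (le1M q01 (pw01 k)) => ? ?; case: (le1M q01 (pw01 n)) => ? ?.
closef.
Qed.

Lemma N_top m : ph m.+1 m.+1 * (1 - B * q ^+ m) = ((B/A) - B * q ^+ m) * ph m m.
Proof.
rewrite !phi_gen // !subnn.
expand.
case: (pw01 m) => ? ?; case: (le1M q01 (pw01 m)) => ? ?.
closef.
Qed.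


End S.

Section M.
Variables (R : realType) (q beta A B : R).
Hypotheses (hq0 : 0 <= q) (hq1 : q < 1) (hb : 0 < beta) (hB0 : 0 < B) (hBA : B < A) (hA1 : A < 1).
Ltac hy := move: (hq0) (hq1) (hb) (hB0) (hBA) (hA1) => ??????.
Notation ph := (phi q (B/A) B).
Notation px := (spg q beta A B).
Notation py := (spg q beta B A).
Let N_0 := N_0 hq0 hq1 hb hB0 hBA hA1.
Let N_S := N_S hq0 hq1 hb hB0 hBA hA1.
Let N_top := N_top hq0 hq1 hb hB0 hBA hA1.
Let C0_0 := C0_0 hq0 hq1 hb hB0 hBA hA1.
Let C0_S := C0_S hq0 hq1 hb hB0 hBA hA1.
Let C0_top := C0_top hq0 hq1 hb hB0 hBA hA1.
Let C1_a := C1_a hq0 hq1 hb hB0 hBA hA1.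
Let pw01 := pw01 hq0 hq1 hb hB0 hBA hA1.

Lemma sum_ext m (a b : nat -> R) :
  \sum_(j < m.+1) a j + \sum_(j < m.+1) b j =
  \sum_(j < m.+2) ((if (j <= m)%N then a j else 0) + (if (j : nat) is j'.+1 then b j' else 0)).
Proof.
rewrite big_split /= [X in _ = X + _]big_ord_recr [X in _ = _ + X]big_ord_recl /= ltnn addr0 add0r.
congr (_ + _); apply: eq_bigr => j _ /=; first [by [] | by rewrite -ltnS ltn_ord].
Qed.

Lemma sum_ext1 m (a : nat -> R) :
  \sum_(j < m.+1) a j = \sum_(j < m.+2) (if (j <= m)%N then a j else 0).
Proof.
rewrite [X in _ = X]big_ord_recr /= ltnn addr0; apply: eq_bigr => j _ /=; by rewrite -ltnS ltn_ord.
Qed.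

Lemma sum_ext2 m (a : nat -> R) :
  \sum_(j < m) a j = \sum_(j < m.+1) (if (j < m)%N then a j else 0).
Proof.
rewrite [X in _ = X]big_ord_recr /= ltnn addr0; apply: eq_bigr => j _ /=; by rewrite ltn_ord.
Qed.

Lemma sum_phi m : \sum_(j < m.+1) ph j m = 1.
Proof.
elim: m => [|m IH].
  rewrite big_ord_recr big_ord0 /= /phi /qpoch !big_ord0 /=.
  by rewrite add0r !mul1r !invr1 !mul1r.
have nz : 1 - B * q ^+ m != 0.
  apply: lt0r_neq0; case: (pw01 m) => ? ?; hy; nra.
apply: (mulIf nz); rewrite -[X in _ = X * _]IH !mulr_suml.
pose a j := (1 - (B/A) * q ^+ (m - j)) * ph j m.
pose b j := q ^+ (m - j) * ((B/A) - B * q ^+ j) * ph j m.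
transitivity (\sum_(j < m.+2) ((if (j <= m)%N then a j else 0) + (if (j : nat) is j'.+1 then b j' else 0))).
  apply: eq_bigr => -[j hj] _ /=.
  case: (ltngtP j m.+1) => [hl|hl|->].
  - case: j hl {hj} => [|k] hl.
      by rewrite /a subn0 addr0 N_0.
    rewrite ltnS in hl; rewrite hl /a /b.
    have [n en] : exists n, m = (k.+1 + n)%N by exists (m - k.+1)%N; lia.
    rewrite en.
    have -> : (k.+1 + n - k.+1 = n)%N by lia.
    have -> : (k.+1 + n - k = n.+1)%N by lia.
    exact: N_S.
  - lia.
  - by rewrite ltnn add0r /b subnn expr0 mul1r N_top.
rewrite -sum_ext -big_split /=; apply: eq_bigr => -[j hj] _ /=.
rewrite /a /b -mulrDl [RHS]mulrC; congr (_ * _).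
have e : q ^+ m = q ^+ (m - j) * q ^+ j by rewrite -exprD subnK.
rewrite e; ring.
Qed.


Lemma gap_y (x2 : int) (j : nat) : gap (x2 + 1 + j%:Z, x2) = j.
Proof. rewrite /gap /=; lia. Qed.

Lemma next_tt (x1 x2 : int) : Defs.next (x1, x2) true true = (x1 + 1, x2 + 1).
Proof. by []. Qed.
Lemma next_ft (x1 x2 : int) : Defs.next (x1, x2) false true = (x1, x2 + 1).
Proof. by rewrite /Defs.next /= addr0. Qed.
Lemma next_tf (x1 x2 : int) : Defs.next (x1, x2) true false = (x1 + 1, x2).
Proof. by rewrite /Defs.next /= addr0. Qed.
Lemma next_ff (x1 x2 : int) : Defs.next (x1, x2) false false = (x1, x2).
Proof. by rewrite /Defs.next /= !addr0. Qed.
Lemma next_ytt (x2 : int) (i : nat) : Defs.next (x2 + 1 + i%:Z, x2) true true = (x2 + 1 + 1 + i%:Z, x2 + 1).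
Proof. rewrite /Defs.next /=; congr (_, _); lia. Qed.
Lemma next_yft (x2 : int) (i : nat) : Defs.next (x2 + 1 + i%:Z, x2) false true = (x2 + 1 + i%:Z, x2 + 1).
Proof. rewrite /Defs.next /=; congr (_, _); lia. Qed.
Lemma next_ytf (x2 : int) (i : nat) : Defs.next (x2 + 1 + i%:Z, x2) true false = (x2 + 1 + (i.+1)%:Z, x2).
Proof. rewrite /Defs.next /=; congr (_, _); lia. Qed.
Lemma next_yff (x2 : int) (i : nat) : Defs.next (x2 + 1 + i%:Z, x2) false false = (x2 + 1 + i%:Z, x2).
Proof. rewrite /Defs.next /=; congr (_, _); lia. Qed.
Lemma gap_tt (x1 x2 : int) : gap (x1 + 1, x2 + 1) = gap (x1, x2).
Proof. rewrite /gap /=; lia. Qed.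
Lemma gap_tf (x1 x2 : int) : x2 < x1 -> gap (x1 + 1, x2) = (gap (x1, x2)).+1.
Proof. rewrite /gap /=; lia. Qed.

Lemma yshift (x2 : int) (i : nat) : x2 + 1 + (i.+1)%:Z = x2 + 1 + 1 + i%:Z.
Proof. lia. Qed.

Variables (s0 s1 : R).
Hypotheses (hA : s0 ^+ 2 = A) (hB : s1 ^+ 2 = B).


Lemma combine1 g (c1 c2 : R) (u v w z : nat -> R) :
  (forall k, (k < g)%N -> c1 * u k + c2 * v k = w k + z k) -> c1 * u g = w g ->
  c1 * \sum_(k < g.+1) u k + c2 * \sum_(k < g) v k = \sum_(k < g.+1) w k + \sum_(k < g) z k.
Proof.
move=> hk hg.
have S : \sum_(k < g) (c1 * u k + c2 * v k) = \sum_(k < g) (w k + z k).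
  by apply: eq_bigr => k _; apply: hk.
rewrite !big_split /= -!mulr_sumr in S.
rewrite !big_ord_recr /=.
rewrite mulrDr; lra.
Qed.

Lemma combine0 g (c1 c2 : R) (u v w z : nat -> R) :
  c1 * u 0%N + c2 * v 0%N = w 0%N ->
  (forall k, (k < g)%N -> c1 * u k.+1 + c2 * v k.+1 = w k.+1 + z k) ->
  c1 * u g.+1 = z g ->
  c1 * \sum_(k < g.+2) u k + c2 * \sum_(k < g.+1) v k = \sum_(k < g.+1) z k + \sum_(k < g.+1) w k.
Proof.
move=> h0 hk hg.
have S : \sum_(k < g) (c1 * u k.+1 + c2 * v k.+1) = \sum_(k < g) (w k.+1 + z k).
  by apply: eq_bigr => k _; apply: hk.
rewrite !big_split /= -!mulr_sumr in S.
rewrite [X in c1 * X]big_ord_recr [X in c1 * (X + _)]big_ord_recl [X in c2 * X]big_ord_recl.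
rewrite [X in _ = X + _]big_ord_recr [X in _ = _ + X]big_ord_recl /=.
rewrite !mulrDr; lra.
Qed.

Lemma lin2 (a1 b1 a2 b2 c1 d1 c2 d2 F : R) : a1*b1 + a2*b2 = c1*d1 + c2*d2 ->
  a1*(b1*F) + a2*(b2*F) = c1*(d1*F) + c2*(d2*F).
Proof. by move=> E; rewrite !mulrA -!mulrDl E. Qed.
Lemma lin21 (a1 b1 a2 b2 c1 d1 F : R) : a1*b1 + a2*b2 = c1*d1 ->
  a1*(b1*F) + a2*(b2*F) = c1*(d1*F).
Proof. by move=> E; rewrite !mulrA -!mulrDl E. Qed.
Lemma lin1 (a1 b1 c1 d1 F : R) : a1*b1 = c1*d1 -> a1*(b1*F) = c1*(d1*F).
Proof. by move=> E; rewrite !mulrA E. Qed.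

Lemma sumb (F : bool -> R) : \sum_(b : bool) F b = F true + F false.
Proof. by rewrite big_bool. Qed.

Lemma mainF a : forall st : int * int, st.2 < st.1 ->
  fut_prob q beta s0 s1 st a =
  \sum_(j < (gap st).+1) ph j (gap st) * fut_prob q beta s1 s0 (st.2 + 1 + (j:nat)%:Z, st.2) a.
Proof.
elim: a => [|a1 a IH] [x1 x2] /= H.
  by under eq_bigr do rewrite mulr1; rewrite sum_phi.
symmetry; under eq_bigr do rewrite exchange_big mulr_sumr.
rewrite exchange_big; symmetry; rewrite [LHS]exchange_big; apply: eq_bigr => h1 _.
case: (x2 + (h1:nat)%:Z == a1); last first.
  rewrite big1 //; symmetry; apply: big1 => j _; exact: mulr0.
rewrite sumb !step_probE hA hB /=.
under eq_bigr do rewrite sumb !step_probE hA hB gap_y.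
move Eg: (gap (x1, x2)) => g.
case: h1.
-
  rewrite next_tt next_ft.
  under eq_bigr do rewrite next_ytt next_yft.
  rewrite IH /=; last by lia.
  rewrite gap_tt Eg.
  pose f k := fut_prob q beta s1 s0 (x2 + 1 + 1 + k%:Z, x2 + 1) a.
  have P2 : px g false true * fut_prob q beta s0 s1 (x1, x2 + 1) a =
            px g false true * \sum_(k < g) ph k g.-1 * f k.
    destruct g as [|g'].
      by rewrite /spg /= expr0 subrr !(mulr0, mul0r).
    rewrite IH /=; last by move: Eg; rewrite /gap /=; lia.
    have -> : gap (x1, x2 + 1) = g' by move: Eg; rewrite /gap /=; lia.
    by [].
  rewrite P2 /f /=.
  symmetry; under eq_bigr do rewrite mulrDr.
  rewrite big_split /= [X in _ + X]big_ord_recl /=.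
  have -> : py 0 false true = 0 by rewrite /spg /= expr0 subrr !(mulr0, mul0r).
  rewrite mul0r mulr0 add0r.
  under [X in _ + X]eq_bigr do rewrite /bump /= add1n yshift.
  symmetry.
  apply: (@combine1 g _ _ (fun k => ph k g * f k) (fun k => ph k g.-1 * f k)
     (fun k => ph k g * (py k true true * f k)) (fun k => ph k.+1 g * (py k.+1 false true * f k))).
    move=> k hk /=.
    have [n en] : exists n, g = (k + n.+1)%N by exists (g - k.+1)%N; lia.
    apply: lin2; rewrite en addnS succnK.
    have /= E := C1_a k n.
    rewrite addnS in E. lra.
  apply: lin1.
  by apply: C1_b.
- rewrite next_tf next_ff.
  under eq_bigr do rewrite next_ytf next_yff.
  rewrite IH; last by rewrite /=; lia.
  rewrite IH //= gap_tf // Eg.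
  symmetry; under eq_bigr do rewrite mulrDr.
  rewrite big_split /=; symmetry.
  pose f0 k := fut_prob q beta s1 s0 (x2 + 1 + k%:Z, x2) a.
  apply: (@combine0 g _ _ (fun k => ph k g.+1 * f0 k) (fun k => ph k g * f0 k)
     (fun k => ph k g * (py k false false * f0 k)) (fun k => ph k g * (py k true false * f0 k.+1))) => /=.
  + apply: lin21.
    have E := C0_0 g. lra.
  + move=> k hk.
    have [n en] : exists n, g = (k.+1 + n)%N by exists (g - k.+1)%N; lia.
    apply: lin2; rewrite en.
    have /= E := C0_S k n. lra.
  + apply: lin1.
    have E := C0_top g. lra.
Qed.

End M.

Unset Implicit Arguments.

Theorem corollary8p5 (R : realType) (q beta s0 s1 : R) (x10 x20 : int) :
  0 <= q -> q < 1 -> 0 < beta ->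
  -1 < s0 -> s0 < 0 -> -1 < s1 -> s1 < 0 -> `|s1| < `|s0| ->
  x20 < x10 ->
  forall a : seq int,
    traj2_prob q beta s0 s1 (x10, x20) a =
    \sum_(j < (absz (x10 - x20 - 1)%R).+1)
       phi q (s1 ^+ 2 / s0 ^+ 2) (s1 ^+ 2) j (absz (x10 - x20 - 1)%R)
       * traj2_prob q beta s1 s0 (x20 + 1 + (j : nat)%:Z, x20) a.
Proof.
move=> hq0 hq1 hb h0a h0b h1a h1b habs hx a.
rewrite !ltr0_norm // in habs.
have hB0 : 0 < s1 ^+ 2 by rewrite expr2; nra.
have hBA : s1 ^+ 2 < s0 ^+ 2 by rewrite !expr2; nra.
have hA1 : s0 ^+ 2 < 1 by rewrite expr2; nra.
case: a => [|a0 a] /=.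
  by under eq_bigr do rewrite mulr1; rewrite (sum_phi hq0 hq1 hb hB0 hBA hA1).
case: (x20 == a0); last first.
  by symmetry; apply: big1 => j _; rewrite mulr0.
by rewrite (mainF hq0 hq1 hb hB0 hBA hA1 (erefl _) (erefl _) a (st := (x10, x20))).
Qed.
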